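(* For every positive integer $r$, $$\int_0^{\frac{\pi}{2}}\sin^{2r-1}x\,\cos\frac{x}{2}\,\mathrm{d}x=\frac{6\cdot 16^{r-1}}{r\binom{4r}{2r}}\left(\frac{4}{3}-\sqrt{2}\sum_{k=0}^{r-1} \frac{\binom{4k}{2k}}{(6k+3)16^k}\right).$$ *)

(* Defs.v *)
From Stdlib Require Export Reals.
From Coquelicot Require Export Coquelicot.

(* Main.v *)
Require Import Defs.
From Stdlib Require Import Lia Lra Psatz.
Open Scope R_scope.

Definition G (k : nat) (x : R) : R :=
  4 * INR (S (S k)) * sin x ^ (S k) * cos x * cos (x/2)
  + 2 * sin x ^ (S (S k)) * sin (x/2).

Lemma G_deriv k x : is_derive (G k) x
  (4 * INR (S (S k)) * INR (S k) * (sin x ^ k * cos (x/2))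
   - (4 * INR (S (S k)) ^ 2 - 1) * (sin x ^ (S (S k)) * cos (x/2))).
Proof.
  unfold G. auto_derive; [exact I|].
  rewrite !S_INR. cbn [Init.Nat.pred pow].
  replace (match k with 0%nat => 1 | S _ => INR k + 1 end) with (INR k + 1) by (destruct k; simpl; ring).
  set (K := INR k).
  assert (Hc : cos x ^ 2 = 1 - sin x ^ 2) by (rewrite <- (sin2_cos2 x); unfold Rsqr; ring).
  replace (x * / 2) with (x/2) by (unfold Rdiv; ring).
  set (s := sin x) in *; set (c := cos x) in *. set (u := cos (x/2)); set (v := sin (x/2)).
  ring_simplify. rewrite Hc. field.
Qed.

Lemma comb f g a b c d x : is_derive f x a -> is_derive g x b ->
  is_derive (fun x => (c * f x - g x)/d) x ((c*a - b)/d).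
Proof.
  intros Hf Hg.
  apply (is_derive_ext (fun x => scal (/d) (minus (scal c (f x)) (g x)))).
  { intro t. unfold scal, minus, plus, opp; simpl. unfold mult; simpl. unfold Rdiv; ring. }
  replace ((c*a-b)/d) with (scal (/d) (minus (scal c a) b)).
  2:{ unfold scal, minus, plus, opp; simpl. unfold mult; simpl. unfold Rdiv. ring. }
  apply is_derive_scal. apply @is_derive_minus. apply is_derive_scal. exact Hf. exact Hg.
Qed.

Fixpoint F (m : nat) (x : R) : R :=
  match m with
  | O => -4/3 * cos (x/2) ^ 3
  | S m' => (4 * INR (S (S (2*m'+1))) * INR (S (2*m'+1)) * F m' x - G (2*m'+1) x)
            / (4 * INR (S (S (2*m'+1))) ^ 2 - 1)
  end.

Lemma F_deriv m x : is_derive (F m) x (sin x ^ (2*m+1) * cos (x/2)).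
Proof.
  induction m as [|m IH].
  - simpl F. auto_derive; [exact I|].
    replace (x * / 2) with (x/2) by (unfold Rdiv; ring).
    replace (sin x) with (sin (2 * (x/2))) by (f_equal; field).
    rewrite sin_2a. simpl. field.
  - simpl F.
    replace (2 * S m + 1)%nat with (S (S (2*m+1))) by lia.
    set (k := (2*m+1)%nat) in *.
    assert (Hd : 4 * INR (S (S k)) ^ 2 - 1 <> 0).
    { rewrite !S_INR. pose proof (pos_INR k). nra. }
    pose proof (comb _ _ _ _ (4 * INR (S (S k)) * INR (S k)) (4 * INR (S (S k)) ^ 2 - 1) _ IH (G_deriv k x)) as H.
    replace (2 * m + 1)%nat with k in H by reflexivity.
    match type of H with is_derive _ _ ?v => replace (sin x ^ S (S k) * cos (x/2)) with v end.
    + exact H.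
    + field. exact Hd.
Qed.

Definition V m := F m (PI/2) - F m 0.

Lemma s2 : sqrt 2 * sqrt 2 = 2.
Proof. apply sqrt_sqrt; lra. Qed.

Lemma V0 : V 0 = 4/3 - sqrt 2 / 3.
Proof.
  unfold V; simpl F. replace (PI/2/2) with (PI/4) by field.
  replace (0/2) with 0 by field. rewrite cos_PI4, cos_0.
  pose proof s2. assert (sqrt 2 <> 0) by (intro Z; rewrite Z in H; lra).
  field_simplify; auto.
  replace (sqrt 2 ^ 3) with (2 * sqrt 2) by (simpl; rewrite Rmult_1_r, <- Rmult_assoc, H; ring).
  field_simplify_eq; auto; nra.
Qed.

Lemma F_S m x : F (S m) x = (4 * INR (S (S (2*m+1))) * INR (S (2*m+1)) * F m x - G (2*m+1) x)
            / (4 * INR (S (S (2*m+1))) ^ 2 - 1).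
Proof. reflexivity. Qed.

Lemma VS m : V (S m) = (4 * INR (S (S (2*m+1))) * INR (S (2*m+1)) * V m - sqrt 2)
            / (4 * INR (S (S (2*m+1))) ^ 2 - 1).
Proof.
  unfold V; rewrite !F_S. unfold G.
  replace (PI/2/2) with (PI/4) by field.
  replace (0/2) with 0 by field. rewrite sin_PI4, sin_PI2, cos_PI2, sin_0.
  pose proof s2. assert (sqrt 2 <> 0) by (intro Z; rewrite Z in H; lra).
  assert (Hd : 4 * INR (S (S (2*m+1))) ^ 2 - 1 <> 0).
  { rewrite !S_INR. pose proof (pos_INR (2*m+1)). nra. }
  set (N1 := INR (S (2*m+1))) in *. set (N2 := INR (S (S (2*m+1)))) in *.
  rewrite !pow1. rewrite (pow_i (S (2*m+1))), (pow_i (S (S (2*m+1)))) by lia.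
  assert (E : 1 / sqrt 2 = sqrt 2 / 2) by (field_simplify_eq; auto; nra).
  rewrite E. field; auto.
Qed.

Lemma Cdiag k : Binomial.C (4*k) (2*k) = INR (Factorial.fact (4*k)) / (INR (Factorial.fact (2*k)) * INR (Factorial.fact (2*k))).
Proof. unfold Binomial.C. replace (4*k-2*k)%nat with (2*k)%nat by lia. reflexivity. Qed.

Lemma Cpos k : 0 < Binomial.C (4*k) (2*k).
Proof. rewrite Cdiag. pose proof (lt_0_INR _ (Factorial.lt_O_fact (4*k))). pose proof (lt_0_INR _ (Factorial.lt_O_fact (2*k))).
  apply Rdiv_lt_0_compat; nra. Qed.

Lemma Cstep k : Binomial.C (4*S k) (2*S k) = Binomial.C (4*k) (2*k) *
  ((4*INR k+4)*(4*INR k+3)*(4*INR k+2)*(4*INR k+1)) / ((2*INR k+2)^2*(2*INR k+1)^2).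
Proof.
  rewrite !Cdiag.
  replace (4 * S k)%nat with (S (S (S (S (4*k))))) by lia.
  replace (2 * S k)%nat with (S (S (2*k))) by lia.
  change (Factorial.fact (S ?n)) with (S n * Factorial.fact n)%nat.
  change (Factorial.fact (S ?n)) with (S n * Factorial.fact n)%nat.
  change (Factorial.fact (S ?n)) with (S n * Factorial.fact n)%nat.
  change (Factorial.fact (S ?n)) with (S n * Factorial.fact n)%nat.
  rewrite !mult_INR, !S_INR, !mult_INR. simpl INR.
  pose proof (INR_fact_neq_0 (4*k)). pose proof (INR_fact_neq_0 (2*k)). pose proof (pos_INR k).
  field. repeat split; try lra; auto.
Qed.

Lemma Vclosed m : V m = 6 * 16 ^ (S m - 1) / (INR (S m) * Binomial.C (4 * S m) (2 * S m))
    * (4 / 3 - sqrt 2 * sum_f_R0 (fun k => Binomial.C (4 * k) (2 * k)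
                                   / ((6 * INR k + 3) * 16 ^ k)) (S m - 1)).
Proof.
  induction m as [|m IH].
  - rewrite V0, Cstep, Cdiag. simpl. rewrite C_n_n. field.
  - rewrite VS, IH.
    replace (S (S m) - 1)%nat with (S m) by lia.
    replace (S m - 1)%nat with m by lia.
    cbn [sum_f_R0].
    rewrite (Cstep (S m)).
    pose proof (Cpos (S m)).
    set (C0 := Binomial.C (4 * S m) (2 * S m)) in *.
    set (Sm := sum_f_R0 _ m).
    change (16 ^ S m) with (16 * 16 ^ m).
    pose proof (pow_lt 16 m ltac:(lra)).
    rewrite !S_INR, !plus_INR, !mult_INR, !S_INR. simpl INR.
    pose proof (pos_INR m).
    field. repeat split; try lra; nra.
Qed.

Theorem proposition4p0p2 (r : nat) (hr : (1 <= r)%nat) :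
  RInt (fun x => (sin x) ^ (2 * r - 1) * cos (x / 2)) 0 (PI / 2)
  = 6 * 16 ^ (r - 1) / (INR r * Binomial.C (4 * r) (2 * r))
    * (4 / 3 - sqrt 2 * sum_f_R0 (fun k => Binomial.C (4 * k) (2 * k)
                                   / ((6 * INR k + 3) * 16 ^ k)) (r - 1)).
Proof.
  destruct r as [|m]; [lia|].
  rewrite <- Vclosed.
  replace (2 * S m - 1)%nat with (2*m+1)%nat by lia.
  apply is_RInt_unique.
  apply (is_RInt_derive (F m)).
  - intros x _. apply F_deriv.
  - intros x _. apply (@ex_derive_continuous R_AbsRing R_NormedModule). auto_derive. exact I.
Qed.
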